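(* Consider problem (P) and suppose Assumptions A and B hold. Let $\{(x^t,L_g^t)\}$ be generated by SCP$_{ls}$. Then: (i) $\{x^t\}$ is bounded; (ii) the sequence $\{\bar F(x^{t+1},x^t,L_g^t)\}$ is nonincreasing and converges to some real number $\bar F^*$, and for all $t\ge1$, $\bar F(x^{t+1},x^t,L_g^t)\le\bar F(x^t,x^{t-1},L_g^{t-1})-\frac c2\|x^{t+1}-x^t\|^2$; (iii) $\lim_{t\to\infty}\|x^{t+1}-x^t\|=0$.
   Context: Problem (P): $\min_{x\in\mathbb R^n}F(x):=f(x)+P_1(x)-P_2(x)+\delta_{\{g\le 0\}}(x)$, where $f:\mathbb R^n\to\mathbb R$ is continuously differentiable, $P_1,P_2:\mathbb R^n\to\mathbb R$ are convex and continuous, $g=(g_1,\dots,g_m):\mathbb R^n\to\mathbb R^m$ is continuous with $\{x:g(x)\le0\}\neq\emptyset$ (componentwise inequalities), $\delta_C$ the indicator function of $C$. Assumption A: (i) $\nabla f$ is Lipschitz with modulus $L_f$; (ii) each $g_i$ is differentiable with $\nabla g_i$ Lipschitz with modulus $L_{g_i}$; (iii) $F$ is level-bounded. Assumption B (MFCQ): each $g_i$ is continuously differentiable and for every $x$ with $g(x)\le0$ there is $d$ with $\langle\nabla g_i(x),d\rangle<0$ for all $i\in I(x):=\{j:g_j(x)=0\}$. $\bar G(x,y,w)\in\mathbb R^m$ ($x,y\in\mathbb R^n,w\in\mathbb R^m$) has components $\bar G_i(x,y,w)=g_i(y)+\langle\nabla g_i(y),x-y\rangle+\frac{w_i}{2}\|x-y\|^2$,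 and $\bar F(x,y,w):=f(x)+P_1(x)-P_2(x)+\delta_{\{\bar G\le0\}}(x,y,w)$. Algorithm SCP$_{ls}$: fix $c>0$, $0<\underline L<\bar L$, $\tau>1$ and $x^0$ with $g(x^0)\le0$. For $t=0,1,2,\dots$: (1) pick any $\xi^t\in\partial P_2(x^t)$; (2) choose $L_f^{t,0}\in[\underline L,\bar L]$, $L_g^{t,0}\in[\underline L,\bar L]^m$ arbitrarily, set $\tilde L_f=L_f^{t,0}$, $\tilde L_g=L_g^{t,0}$; (3) compute $\tilde x$ solving: minimize $\langle\nabla f(x^t)-\xi^t,x-x^t\rangle+\frac{\tilde L_f}{2}\|x-x^t\|^2+P_1(x)$ subject to $\bar G(x,x^t,\tilde L_g)\le0$. If $g(\tilde x)\le0$ and $F(\tilde x)\le F(x^t)-\frac c2\|\tilde x-x^t\|^2$, set $x^{t+1}=\tilde x$, $L_f^t=\tilde L_f$, $L_g^t=\tilde L_g$ and go to iteration $t+1$; otherwise, if $g(\tilde x)\not\le0$ replace $\tilde L_g$ by $\tau\tilde L_g$, while if $g(\tilde x)\le0$ but the decrease inequality fails replace $\tilde L_f$ by $\tau\tilde L_f$, and repeat step (3). (Under Assumptions A and B this algorithm is well defined and produces infinite sequences.) *)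

(* Defs.v *)
From Stdlib Require Import Reals Lra Lia ClassicalEpsilon.
From Stdlib Require Fin.
Open Scope R_scope.

Definition vec (n : nat) : Type := Fin.t n -> R.

Definition vadd {n} (x y : vec n) : vec n := fun i => x i + y i.
Definition vsub {n} (x y : vec n) : vec n := fun i => x i - y i.
Definition vscale {n} (a : R) (x : vec n) : vec n := fun i => a * x i.

Fixpoint dot (n : nat) : vec n -> vec n -> R :=
  match n return vec n -> vec n -> R with
  | O => fun _ _ => 0
  | S m => fun x y => x Fin.F1 * y Fin.F1
                      + dot m (fun i => x (Fin.FS i)) (fun i => y (Fin.FS i))
  end.
Arguments dot {n} x y.

Definition norm2 {n} (x : vec n) : R := dot x x.
Definition norm {n} (x : vec n) : R := sqrt (dot x x).

Definition has_gradient {n} (h : vec n -> R) (G : vec n) (x : vec n) : Prop :=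
  forall eps, 0 < eps -> exists delta, 0 < delta /\
    forall d : vec n, norm d < delta ->
      Rabs (h (vadd x d) - h x - dot G d) <= eps * norm d.

Definition continuous_fun {n} (h : vec n -> R) : Prop :=
  forall x eps, 0 < eps -> exists delta, 0 < delta /\
    forall y, norm (vsub y x) < delta -> Rabs (h y - h x) < eps.

Definition continuous_vfun {n} (G : vec n -> vec n) : Prop :=
  forall x eps, 0 < eps -> exists delta, 0 < delta /\
    forall y, norm (vsub y x) < delta -> norm (vsub (G y) (G x)) < eps.

Definition lipschitz_vfun {n} (G : vec n -> vec n) (L : R) : Prop :=
  forall x y, norm (vsub (G x) (G y)) <= L * norm (vsub x y).

Definition convex_fun {n} (h : vec n -> R) : Prop :=
  forall x y lam, 0 <= lam <= 1 ->
    h (vadd (vscale lam x) (vscale (1 - lam) y)) <= lam * h x + (1 - lam) * h y.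

Definition in_subdiff {n} (h : vec n -> R) (x xi : vec n) : Prop :=
  forall y, h y >= h x + dot xi (vsub y x).

Definition feasible {n m} (g : Fin.t m -> vec n -> R) (x : vec n) : Prop :=
  forall i, g i x <= 0.

(* the finite part f + P1 - P2 of F *)
Definition Fval {n} (f P1 P2 : vec n -> R) (x : vec n) : R := f x + P1 x - P2 x.

Definition Gbar {n m} (g : Fin.t m -> vec n -> R) (gg : Fin.t m -> vec n -> vec n)
  (x y : vec n) (w : Fin.t m -> R) (i : Fin.t m) : R :=
  g i y + dot (gg i y) (vsub x y) + w i / 2 * norm2 (vsub x y).

Inductive ER : Type := ERfin : R -> ER | ERinf : ER.

Definition ER_le (a b : ER) : Prop :=
  match a, b with
  | _, ERinf => True
  | ERinf, ERfin _ => False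
  | ERfin x, ERfin y => x <= y
  end.

Definition ER_subR (a : ER) (r : R) : ER :=
  match a with ERfin x => ERfin (x - r) | ERinf => ERinf end.

Definition ER_cv (u : nat -> ER) (l : R) : Prop :=
  forall eps, 0 < eps -> exists N, forall t, (N <= t)%nat ->
    exists r, u t = ERfin r /\ Rabs (r - l) < eps.

Definition Fbar {n m} (f P1 P2 : vec n -> R) (g : Fin.t m -> vec n -> R)
  (gg : Fin.t m -> vec n -> vec n) (x y : vec n) (w : Fin.t m -> R) : ER :=
  if excluded_middle_informative (forall i, Gbar g gg x y w i <= 0)
  then ERfin (Fval f P1 P2 x) else ERinf.

Definition subobj {n} (gradf : vec n -> vec n) (P1 : vec n -> R)
  (xt xi : vec n) (Lf : R) (x : vec n) : R :=
  dot (vsub (gradf xt) xi) (vsub x xt) + Lf / 2 * norm2 (vsub x xt) + P1 x.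

Definition solves_sub {n m} (gradf : vec n -> vec n) (P1 : vec n -> R)
  (g : Fin.t m -> vec n -> R) (gg : Fin.t m -> vec n -> vec n)
  (xt xi : vec n) (Lf : R) (Lg : Fin.t m -> R) (z : vec n) : Prop :=
  (forall i, Gbar g gg z xt Lg i <= 0) /\
  forall y, (forall i, Gbar g gg y xt Lg i <= 0) ->
    subobj gradf P1 xt xi Lf z <= subobj gradf P1 xt xi Lf y.

Definition accepted {n m} (f P1 P2 : vec n -> R) (g : Fin.t m -> vec n -> R)
  (c : R) (xt z : vec n) : Prop :=
  feasible g z /\ Fval f P1 P2 z <= Fval f P1 P2 xt - c / 2 * norm2 (vsub z xt).

(* One outer iteration t of SCP_ls: from xt with chosen xi, the inner line search
   (trial parameters Lfs k, Lgs k and trial points xs k, k = 0..K) ends with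
   acceptance at k = K, producing x_next, Lf_t, Lg_t. *)
Definition SCP_ls_iter {n m} (f : vec n -> R) (gradf : vec n -> vec n)
  (P1 P2 : vec n -> R) (g : Fin.t m -> vec n -> R) (gg : Fin.t m -> vec n -> vec n)
  (c Llo Lhi tau : R) (xt xi x_next : vec n) (Lf_t : R) (Lg_t : Fin.t m -> R) : Prop :=
  exists (K : nat) (Lfs : nat -> R) (Lgs : nat -> Fin.t m -> R) (xs : nat -> vec n),
    Llo <= Lfs O <= Lhi /\
    (forall i, Llo <= Lgs O i <= Lhi) /\
    (forall k, (k <= K)%nat -> solves_sub gradf P1 g gg xt xi (Lfs k) (Lgs k) (xs k)) /\
    (forall k, (k < K)%nat ->
       ~ accepted f P1 P2 g c xt (xs k) /\
       ((~ feasible g (xs k) /\ Lfs (S k) = Lfs k /\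
           forall i, Lgs (S k) i = tau * Lgs k i) \/
        (feasible g (xs k) /\ Lfs (S k) = tau * Lfs k /\
           forall i, Lgs (S k) i = Lgs k i))) /\
    accepted f P1 P2 g c xt (xs K) /\
    x_next = xs K /\ Lf_t = Lfs K /\ (forall i, Lg_t i = Lgs K i).

(* Main.v *)
Require Import Defs.
From Stdlib Require Import ZArith Reals Lra Lia Psatz ClassicalEpsilon FunctionalExtensionality Classical.
From Stdlib Require Fin.
Open Scope R_scope.
Lemma dot_ge0 n (x : vec n) : 0 <= dot x x.
Proof. induction n; simpl. lra. specialize (IHn (fun i => x (Fin.FS i))). nra. Qed.

Lemma norm2_ge0 n (x : vec n) : 0 <= norm2 x.
Proof. apply dot_ge0. Qed.

Lemma CS2 n (a b : vec n) : (dot a b)^2 <= dot a a * dot b b.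
Proof.
  induction n; simpl. lra.
  set (a0 := a Fin.F1). set (b0 := b Fin.F1).
  specialize (IHn (fun i => a (Fin.FS i)) (fun i => b (Fin.FS i))).
  set (r := dot (fun i => a (Fin.FS i)) (fun i => b (Fin.FS i))) in *.
  set (A := dot (fun i => a (Fin.FS i)) (fun i => a (Fin.FS i))) in *.
  set (B := dot (fun i => b (Fin.FS i)) (fun i => b (Fin.FS i))) in *.
  assert (HA : 0 <= A) by apply dot_ge0.
  assert (HB : 0 <= B) by apply dot_ge0. clearbody a0 b0 r A B.
  assert (H1 : 2 * (a0*b0*r) <= a0*a0*B + A*(b0*b0)).
  { assert (Hs : 0 <= a0*a0*B + A*(b0*b0)) by nra.
    assert (Hq : (2*(a0*b0*r))^2 <= (a0*a0*B + A*(b0*b0))^2).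
    { assert (4*(a0*b0)^2*r^2 <= 4*(a0*b0)^2*(A*B)).
      { apply Rmult_le_compat_l. nra. exact IHn. }
      assert (0 <= (a0*a0*B - A*(b0*b0))^2) by apply pow2_ge_0.
      replace ((2*(a0*b0*r))^2) with (4*(a0*b0)^2*r^2) by ring.
      replace ((a0*a0*B + A*(b0*b0))^2) with ((a0*a0*B - A*(b0*b0))^2 + 4*(a0*b0)^2*(A*B)) by ring.
      lra. }
    set (X := 2*(a0*b0*r)) in *. set (SS := a0*a0*B + A*(b0*b0)) in *.
    destruct (Rle_or_lt X SS) as [|Hc]. lra.
    assert (SS*SS < X*X) by nra. nra. }
  nra.
Qed.

Lemma CS n (a b : vec n) : Rabs (dot a b) <= norm a * norm b.
Proof.
  unfold norm. rewrite <- sqrt_mult by apply dot_ge0.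
  rewrite <- sqrt_Rsqr_abs. apply sqrt_le_1_alt. unfold Rsqr.
  pose proof (CS2 n a b). simpl in H. lra.
Qed.

Lemma norm_ge0 n (x : vec n) : 0 <= norm x.
Proof. apply sqrt_pos. Qed.

Lemma norm_lt n (d : vec n) e : 0 < e -> norm2 d < e * e -> norm d < e.
Proof.
  intros He H. unfold norm. rewrite <- (sqrt_square e) by lra.
  apply sqrt_lt_1_alt. split. apply dot_ge0. exact H.
Qed.

Lemma norm2_le n (d : vec n) M : norm d <= M -> norm2 d <= M * M.
Proof.
  intros H. pose proof (norm_ge0 n d). unfold norm in *.
  unfold norm2. rewrite <- (sqrt_sqrt (dot d d)) by apply dot_ge0. nra.
Qed.

Lemma vadd_vsub n (l y : vec n) : vadd l (vsub y l) = y.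
Proof. apply functional_extensionality. intro i. unfold vadd, vsub. ring. Qed.

Lemma f_cont n (f : vec n -> R) G l : has_gradient f G l ->
  forall eps, 0 < eps -> exists delta, 0 < delta /\ forall y, norm (vsub y l) < delta -> Rabs (f y - f l) < eps.
Proof.
  intros Hg eps He. destruct (Hg 1 ltac:(lra)) as [d1 [Hd1 Hd]].
  pose proof (norm_ge0 n G).
  exists (Rmin d1 (eps / (norm G + 1) / 2)). split.
  { apply Rmin_glb_lt. lra. apply Rdiv_lt_0_compat; [|lra]. apply Rdiv_lt_0_compat; lra. }
  intros y Hy. set (d := vsub y l) in *.
  assert (Hy1 : norm d < d1) by (eapply Rlt_le_trans; [exact Hy| apply Rmin_l]).
  assert (Hy2 : norm d < eps / (norm G + 1) / 2) by (eapply Rlt_le_trans; [exact Hy| apply Rmin_r]).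
  specialize (Hd d Hy1). unfold d in Hd. rewrite vadd_vsub in Hd. fold d in Hd.
  pose proof (CS n G d). pose proof (norm_ge0 n d).
  assert (Hk : (norm G + 1) * norm d < eps / 2).
  { apply (Rmult_lt_compat_l (norm G + 1)) in Hy2; [|lra].
    replace ((norm G + 1) * (eps / (norm G + 1) / 2)) with (eps/2) in Hy2 by (field; lra). exact Hy2. }
  assert (Rabs (f y - f l) <= Rabs (f y - f l - dot G d) + Rabs (dot G d)).
  { replace (f y - f l) with ((f y - f l - dot G d) + dot G d) at 1 by ring. apply Rabs_triang. }
  nra.
Qed.
Lemma incr_ge (phi : nat -> nat) : (forall k, (phi k < phi (S k))%nat) -> forall k, (k <= phi k)%nat.
Proof. intros H k. induction k. lia. specialize (H k). lia. Qed.

Lemma BW1 (u : nat -> R) M : (forall k, Rabs (u k) <= M) ->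
  exists phi l, (forall k, (phi k < phi (S k))%nat) /\ Un_cv (fun k => u (phi k)) l.
Proof.
  intros HM.
  destruct (Bolzano_Weierstrass u (fun c => -M <= c <= M) (compact_P3 (-M) M)) as [l Hl].
  { intro k. specialize (HM k). unfold Rabs in HM. destruct (Rcase_abs (u k)); lra. }
  assert (Hp : forall N k, exists p, (N <= p)%nat /\ Rabs (u p - l) < / INR (S k)).
  { intros N k.
    assert (Hpos : 0 < / INR (S k)) by (apply Rinv_0_lt_compat, lt_0_INR; lia).
    set (d := mkposreal _ Hpos).
    destruct (Hl (disc l d) N) as [p Hp].
    { exists d. intros y Hy. exact Hy. }
    exists p. exact Hp. }
  set (pick := fun N k => proj1_sig (constructive_indefinite_description _ (Hp N k))).
  assert (Hpick : forall N k, (N <= pick N k)%nat /\ Rabs (u (pick N k) - l) < / INR (S k)).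
  { intros N k. unfold pick. destruct (constructive_indefinite_description _ (Hp N k)). exact a. }
  set (phi := fix phi k := match k with O => pick O O | S k' => pick (S (phi k')) (S k') end).
  exists phi, l. split.
  { intro k. simpl. destruct (Hpick (S (phi k)) (S k)). lia. }
  intros eps He.
  destruct (archimed (/ eps)) as [Ha _].
  assert (Hz : (0 <= Z.to_nat (up (/eps)))%nat) by lia.
  exists (Z.to_nat (up (/ eps))). intros k Hk.
  assert (Hk' : / INR (S k) < eps).
  { assert (Hie : 0 < / eps) by (apply Rinv_0_lt_compat; lra).
    assert (IZR (up (/eps)) <= INR k).
    { rewrite <- (Z2Nat.id (up (/eps))) by (apply le_IZR; lra).
      rewrite <- INR_IZR_INZ. apply le_INR. exact Hk. }
    rewrite S_INR.
    apply (Rmult_lt_reg_l (INR k + 1)). pose proof (pos_INR k). lra.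
    rewrite Rinv_r by (pose proof (pos_INR k); lra).
    apply (Rmult_lt_reg_l (/eps)). exact Hie.
    rewrite Rmult_1_r. replace (/ eps * ((INR k + 1) * eps)) with (INR k + 1) by (field; lra). lra. }
  unfold R_dist.
  assert (Hph : Rabs (u (phi k) - l) < / INR (S k)).
  { destruct k; simpl; apply Hpick. }
  lra.
Qed.

Lemma subseq_cv (u : nat -> R) l phi : (forall k, (phi k < phi (S k))%nat) ->
  Un_cv u l -> Un_cv (fun k => u (phi k)) l.
Proof.
  intros Hphi Hu eps He. destruct (Hu eps He) as [N HN]. exists N. intros k Hk.
  apply HN. pose proof (incr_ge phi Hphi k). lia.
Qed.

Lemma BWn n : forall (u : nat -> vec n) M, (forall k, norm2 (u k) <= M) ->
  exists phi l, (forall k, (phi k < phi (S k))%nat) /\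
     Un_cv (fun k => norm2 (vsub (u (phi k)) l)) 0.
Proof.
  induction n; intros u M HM.
  - exists (fun k => k), (fun _ => 0). split. intro; lia.
    intros eps He. exists O. intros k _. unfold R_dist, norm2. simpl. unfold Rminus. rewrite Rplus_opp_r, Rabs_R0. lra.
  - assert (Hb : forall k, Rabs (u k Fin.F1) <= M + 1).
    { intro k. specialize (HM k). unfold norm2 in HM. simpl in HM.
      pose proof (dot_ge0 n (fun i => u k (Fin.FS i))).
      unfold Rabs. destruct (Rcase_abs (u k Fin.F1)); nra. }
    destruct (BW1 (fun k => u k Fin.F1) _ Hb) as [phi1 [l0 [Hphi1 Hcv1]]].
    destruct (IHn (fun k => fun i => u (phi1 k) (Fin.FS i)) M) as [phi2 [l' [Hphi2 Hcv2]]].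
    { intro k. specialize (HM (phi1 k)). unfold norm2 in *. simpl in HM.
      pose proof (pow2_ge_0 (u (phi1 k) Fin.F1)). simpl in H. lra. }
    exists (fun k => phi1 (phi2 k)), (fun i => Fin.caseS' i (fun _ => R) l0 l').
    split.
    + intro k. specialize (Hphi2 k).
      assert (forall a b, (a < b)%nat -> (phi1 a < phi1 b)%nat).
      { intros a b Hab. induction Hab. apply Hphi1. specialize (Hphi1 m). lia. }
      apply H. exact Hphi2.
    + assert (Ha : Un_cv (fun k => u (phi1 (phi2 k)) Fin.F1 - l0) 0).
      { pose proof (subseq_cv _ _ phi2 Hphi2 Hcv1) as H. simpl in H.
        intros eps He. destruct (H eps He) as [N HN]. exists N. intros k Hk.
        specialize (HN k Hk). unfold R_dist in *. rewrite Rminus_0_r. exact HN. }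
      pose proof (CV_plus _ _ _ _ (CV_mult _ _ _ _ Ha Ha) Hcv2) as Hs.
      rewrite Rmult_0_r, Rplus_0_r in Hs.
      intros eps He. destruct (Hs eps He) as [N HN]. exists N. intros k Hk.
      specialize (HN k Hk). exact HN.
Qed.
Theorem mainTheorem2 (n m : nat)
  (f : vec n -> R) (gradf : vec n -> vec n)
  (P1 P2 : vec n -> R)
  (g : Fin.t m -> vec n -> R) (gg : Fin.t m -> vec n -> vec n)
  (* problem data *)
  (Hf_diff : forall x, has_gradient f (gradf x) x)
  (Hf_C1 : continuous_vfun gradf)
  (HP1_cvx : convex_fun P1) (HP1_cont : continuous_fun P1)
  (HP2_cvx : convex_fun P2) (HP2_cont : continuous_fun P2)
  (Hg_cont : forall i, continuous_fun (g i))
  (Hfeas_ne : exists x, feasible g x)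
  (* Assumption A *)
  (HA1 : exists Lf0, lipschitz_vfun gradf Lf0)
  (HA2 : forall i, (forall x, has_gradient (g i) (gg i x) x) /\
                   exists Lgi, lipschitz_vfun (gg i) Lgi)
  (HA3 : forall alpha, exists M, forall x,
           feasible g x -> Fval f P1 P2 x <= alpha -> norm x <= M)
  (* Assumption B *)
  (HB_C1 : forall i, continuous_vfun (gg i))
  (HB_MFCQ : forall x, feasible g x -> exists d : vec n,
               forall i, g i x = 0 -> dot (gg i x) d < 0)
  (* algorithm parameters *)
  (c Llo Lhi tau : R) (Hc : 0 < c) (HL : 0 < Llo < Lhi) (Htau : 1 < tau)
  (* sequences generated by SCP_ls *)
  (x : nat -> vec n) (xi : nat -> vec n) (Lf : nat -> R) (Lg : nat -> Fin.t m -> R)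
  (Hx0 : feasible g (x O))
  (Hxi : forall t, in_subdiff P2 (x t) (xi t))
  (Hiter : forall t, SCP_ls_iter f gradf P1 P2 g gg c Llo Lhi tau
                       (x t) (xi t) (x (S t)) (Lf t) (Lg t)) :
  (* (i) *)
  (exists M, forall t, norm (x t) <= M) /\
  (* (ii) *)
  ((forall t, ER_le (Fbar f P1 P2 g gg (x (S (S t))) (x (S t)) (Lg (S t)))
                    (Fbar f P1 P2 g gg (x (S t)) (x t) (Lg t))) /\
   (exists Fstar : R, ER_cv (fun t => Fbar f P1 P2 g gg (x (S t)) (x t) (Lg t)) Fstar) /\
   (forall t, (1 <= t)%nat ->
      ER_le (Fbar f P1 P2 g gg (x (S t)) (x t) (Lg t))
            (ER_subR (Fbar f P1 P2 g gg (x t) (x (pred t)) (Lg (pred t)))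
                     (c / 2 * norm2 (vsub (x (S t)) (x t)))))) /\
  (* (iii) *)
  Un_cv (fun t => norm (vsub (x (S t)) (x t))) 0.
Proof.
  set (a := fun t => Fval f P1 P2 (x t)).
  assert (Hstep : forall t, feasible g (x (S t)) /\
      a (S t) <= a t - c / 2 * norm2 (vsub (x (S t)) (x t)) /\
      forall i, Gbar g gg (x (S t)) (x t) (Lg t) i <= 0).
  { intro t. destruct (Hiter t) as [K [Lfs [Lgs [xs [_ [_ [Hsol [_ [Hacc [Hx [_ HLg]]]]]]]]]]].
    unfold a. rewrite Hx. destruct Hacc as [Hf Hd]. split; [exact Hf|]. split; [exact Hd|].
    intro i. destruct (Hsol K (le_n K)) as [HG _]. specialize (HG i).
    unfold Gbar in *. rewrite HLg. exact HG. }
  assert (Hdec : forall t, a (S t) <= a t).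
  { intro t. destruct (Hstep t) as [_ [H _]]. pose proof (norm2_ge0 n (vsub (x (S t)) (x t))).
    assert (0 <= c/2 * norm2 (vsub (x (S t)) (x t))) by (apply Rmult_le_pos; lra). lra. }
  assert (Ha0 : forall t, a t <= a O).
  { induction t. lra. specialize (Hdec t). lra. }
  assert (Hfe : forall t, feasible g (x t)).
  { intros [|t]. exact Hx0. apply Hstep. }
  assert (HFbar : forall t, Fbar f P1 P2 g gg (x (S t)) (x t) (Lg t) = ERfin (a (S t))).
  { intro t. unfold Fbar. destruct (excluded_middle_informative _) as [_|Hn]. reflexivity.
    exfalso. apply Hn. apply Hstep. }
  destruct (HA3 (a O)) as [M HM].
  assert (Hbd : forall t, norm (x t) <= M).
  { intro t. apply HM. apply Hfe. apply Ha0. }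
  assert (Hlb : exists B, forall t, B <= a t).
  { apply NNPP. intro Hn.
    assert (Hk : forall k : nat, exists t, a t < - INR k).
    { intro k. apply NNPP. intro Hn2. apply Hn. exists (- INR k). intro t.
      apply Rnot_lt_le. intro Hlt. apply Hn2. exists t. exact Hlt. }
    set (tk := fun k => proj1_sig (constructive_indefinite_description _ (Hk k))).
    assert (Htk : forall k, a (tk k) < - INR k).
    { intro k. unfold tk. destruct (constructive_indefinite_description _ (Hk k)). exact r. }
    destruct (BWn n (fun k => x (tk k)) (M * M)) as [phi [l [Hphi Hcv]]].
    { intro k. apply norm2_le. apply Hbd. }
    destruct (f_cont n f (gradf l) l (Hf_diff l) (1/3) ltac:(lra)) as [d1 [Hd1 Hc1]].
    destruct (HP1_cont l (1/3) ltac:(lra)) as [d2 [Hd2 Hc2]].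
    destruct (HP2_cont l (1/3) ltac:(lra)) as [d3 [Hd3 Hc3]].
    set (d := Rmin d1 (Rmin d2 d3)).
    assert (Hd : 0 < d) by (unfold d; repeat apply Rmin_glb_lt; lra).
    destruct (Hcv (d * d) ltac:(nra)) as [N HN].
    destruct (archimed (1 - Fval f P1 P2 l)) as [Har _].
    set (k := (N + Z.to_nat (up (1 - Fval f P1 P2 l)))%nat).
    specialize (HN k ltac:(unfold k; lia)).
    unfold R_dist in HN. rewrite Rminus_0_r, Rabs_pos_eq in HN by apply norm2_ge0.
    pose proof (norm_lt n _ d Hd HN) as Hnd.
    assert (H1 : norm (vsub (x (tk (phi k))) l) < d1) by (eapply Rlt_le_trans; [exact Hnd| unfold d; apply Rmin_l]).
    assert (H2 : norm (vsub (x (tk (phi k))) l) < d2) by (eapply Rlt_le_trans; [exact Hnd| unfold d; eapply Rle_trans; [apply Rmin_r| apply Rmin_l]]).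
    assert (H3 : norm (vsub (x (tk (phi k))) l) < d3) by (eapply Rlt_le_trans; [exact Hnd| unfold d; eapply Rle_trans; [apply Rmin_r| apply Rmin_r]]).
    specialize (Hc1 _ H1). specialize (Hc2 _ H2). specialize (Hc3 _ H3).
    specialize (Htk (phi k)).
    assert (Hpk : INR k <= INR (phi k)) by (apply le_INR, incr_ge, Hphi).
    assert (Hkk : IZR (up (1 - Fval f P1 P2 l)) <= INR k).
    { destruct (Z_lt_le_dec (up (1 - Fval f P1 P2 l)) 0) as [Hz|Hz].
      - apply IZR_lt in Hz. pose proof (pos_INR k). lra.
      - rewrite <- (Z2Nat.id (up (1 - Fval f P1 P2 l))) by exact Hz.
        rewrite <- INR_IZR_INZ. apply le_INR. unfold k. lia. }
    unfold a, Fval in Htk. unfold Fval in Har.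
    apply Rabs_def2 in Hc1. apply Rabs_def2 in Hc2. apply Rabs_def2 in Hc3. unfold Fval in Hkk. clear -Htk Hc1 Hc2 Hc3 Har Hkk Hpk. clearbody k tk a. lra. }
  destruct Hlb as [B HB].
  destruct (decreasing_cv a) as [Fstar HFstar].
  { intro t. apply Hdec. }
  { exists (- B). intros r [i Hi]. rewrite Hi. unfold opp_seq. specialize (HB i). lra. }
  split; [exists M; exact Hbd|].
  split; [split; [|split]|].
  - intro t. rewrite !HFbar. simpl. apply Hdec.
  - exists Fstar. intros eps He. destruct (HFstar eps He) as [N HN]. exists N. intros t Ht.
    exists (a (S t)). split. apply HFbar. apply HN. lia.
  - intros t Ht. destruct t as [|t]. lia. simpl pred. rewrite !HFbar. simpl.
    apply Hstep.
  - intros eps He.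
    assert (Hpe : 0 < c / 4 * (eps * eps)) by (apply Rmult_lt_0_compat; [lra| apply Rmult_lt_0_compat; lra]).
    destruct (HFstar (c / 4 * (eps * eps)) Hpe) as [N HN]. exists N. intros t Ht.
    pose proof (HN t Ht) as Ht1. pose proof (HN (S t) ltac:(lia)) as Ht2.
    unfold R_dist in *. apply Rabs_def2 in Ht1. apply Rabs_def2 in Ht2.
    destruct (Hstep t) as [_ [Hs _]].
    rewrite Rminus_0_r, Rabs_pos_eq by apply norm_ge0.
    apply norm_lt. lra.
    apply (Rmult_lt_reg_l (c / 2)). lra. clear -Ht1 Ht2 Hs Hc. clearbody a. lra.
Qed.
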